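(* Let $\rho\geqslant 2$ be an integer, let $(\mathcal{N}_n)_{n\geqslant 0}$ be Narayana's sequence, and let $\alpha\approx 1.46557$ be the unique real root of $x^3-x^2-1$. Suppose that non-negative integers $n,d_1,d_2,d_3,\ell,m,k$ satisfy $1\leqslant k\leqslant m\leqslant \ell$, $d_1,d_2,d_3\in\{0,1,\ldots,\rho-1\}$, $d_1>0$, and $$\mathcal{N}_n=d_1\frac{\rho^\ell-1}{\rho-1}\rho^{m+k}+d_2\frac{\rho^m-1}{\rho-1}\rho^{k}+d_3\frac{\rho^k-1}{\rho-1}.$$ Then $$(\ell+m+k-1)\log\rho+\log\alpha<n\log\alpha<(\ell+m+k)\log\rho+1.$$
   Context: Narayana's sequence is defined by $\mathcal{N}_0=0$, $\mathcal{N}_1=\mathcal{N}_2=1$ and $\mathcal{N}_n=\mathcal{N}_{n-1}+\mathcal{N}_{n-3}$ for $n\geqslant 3$. The right-hand side of the equation is the number whose base-$\rho$ representation consists of $\ell$ digits $d_1$, then $m$ digits $d_2$, then $k$ digits $d_3$. $\log$ is the natural logarithm. *)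

(* Defs.v *)
From Stdlib Require Import Reals Lra Lia.
Open Scope R_scope.

Fixpoint narayana (n : nat) : nat :=
  match n with
  | O => 0
  | S O => 1
  | S (S O) => 1
  | S ((S (S p)) as q) => (narayana q + narayana p)%nat
  end.

(* Main.v *)
Require Import Defs.
From Stdlib Require Import Reals Lra Lia Psatz.
Open Scope R_scope.

Lemma nar_rec p : narayana (p+3) = (narayana (p+2) + narayana p)%nat.
Proof. replace (p+3)%nat with (S (S (S p))) by lia. replace (p+2)%nat with (S (S p)) by lia. reflexivity. Qed.

Lemma alpha_bounds a : a ^ 3 - a ^ 2 - 1 = 0 -> 1 < a /\ a < 1.4663.
Proof.
  intro H.
  assert (H1 : 1 < a).
  { destruct (Rle_lt_dec a 1) as [h|h]; [|exact h].
    assert (a^2*(a-1) = 1) by (replace (a^2*(a-1)) with (a^3-a^2) by ring; lra).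
    assert (0 <= a^2) by (apply pow2_ge_0). nra. }
  split; [exact H1|].
  destruct (Rlt_le_dec a 1.4663) as [h|h]; [exact h|].
  assert (a^2 >= 1.4663^2) by nra.
  assert (a^2*(a-1) >= 1.4663^2 * 0.4663) by nra.
  assert (a^2*(a-1) = 1) by (replace (a^2*(a-1)) with (a^3-a^2) by ring; lra). nra.
Qed.

Lemma upper a : a ^ 3 - a ^ 2 - 1 = 0 -> forall p,
  INR (narayana (p+3)) * a < a^(p+3) /\ INR (narayana (p+4)) * a < a^(p+4) /\
  INR (narayana (p+5)) * a < a^(p+5).
Proof.
  intros H p. destruct (alpha_bounds a H) as [h1 h2].
  assert (E3 : a^3 = a^2+1) by lra.
  induction p as [|p [I1 [I2 I3]]].
  - simpl. repeat split; nra.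
  - replace (S p + 3)%nat with (p+4)%nat by lia.
    replace (S p + 4)%nat with (p+5)%nat by lia.
    replace (S p + 5)%nat with (p+3+3)%nat by lia.
    repeat split; try assumption.
    rewrite nar_rec, plus_INR.
    replace (p+3+2)%nat with (p+5)%nat by lia.
    replace (p+3)%nat with (p+3)%nat by lia.
    rewrite pow_add, E3.
    replace (a^(p+5)) with (a^(p+3)*a^2) in I3 by (rewrite <- pow_add; f_equal; lia).
    nra.
Qed.

Lemma lower a : a ^ 3 - a ^ 2 - 1 = 0 -> forall p,
  0.4 * a^(p+6) <= INR (narayana (p+6)) /\ 0.4 * a^(p+7) <= INR (narayana (p+7)) /\
  0.4 * a^(p+8) <= INR (narayana (p+8)).
Proof.
  intros H p. destruct (alpha_bounds a H) as [h1 h2].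
  assert (E3 : a^3 = a^2+1) by lra.
  assert (a2 : a^2 < 2.15) by nra.
  assert (a2' : 1 < a^2) by nra.
  induction p as [|p [I1 [I2 I3]]].
  - simpl (narayana _). 
    replace (a^(0+6)) with ((a^3)^2) by (rewrite <- pow_mult; reflexivity).
    replace (a^(0+7)) with ((a^3)^2*a) by (rewrite <- pow_mult; simpl; ring).
    replace (a^(0+8)) with ((a^3)^2*a^2) by (rewrite <- pow_mult; simpl; ring).
    rewrite E3. simpl INR. repeat split; nra.
  - replace (S p + 6)%nat with (p+7)%nat by lia.
    replace (S p + 7)%nat with (p+8)%nat by lia.
    replace (S p + 8)%nat with (p+6+3)%nat by lia.
    repeat split; try assumption.
    rewrite nar_rec, plus_INR.
    replace (p+6+2)%nat with (p+8)%nat by lia.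
    rewrite pow_add, E3.
    replace (a^(p+8)) with (a^(p+6)*a^2) in I3 by (rewrite <- pow_add; f_equal; lia).
    nra.
Qed.

Lemma exp1_gt : 2.5 < exp 1.
Proof.
  assert (h := exp_ineq1 (1/8)). assert (1/8 <> 0) by lra.
  specialize (h H).
  replace 1 with (1/8+1/8+1/8+1/8+1/8+1/8+1/8+1/8) by field.
  rewrite !exp_plus.
  set (e := exp (1/8)) in *.
  assert (1.125 <= e) by lra.
  assert (1.125^8 <= e^8) by (apply pow_incr; lra).
  simpl in H1. nra.
Qed.

Theorem lemma3p1 (rho n d1 d2 d3 l m k : nat) (alpha : R) :
  (2 <= rho)%nat ->
  alpha ^ 3 - alpha ^ 2 - 1 = 0 ->
  (1 <= k)%nat -> (k <= m)%nat -> (m <= l)%nat ->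
  (d1 < rho)%nat -> (d2 < rho)%nat -> (d3 < rho)%nat -> (0 < d1)%nat ->
  let r := INR rho in
  INR (narayana n) =
    INR d1 * ((r ^ l - 1) / (r - 1)) * r ^ (m + k)
    + INR d2 * ((r ^ m - 1) / (r - 1)) * r ^ k
    + INR d3 * ((r ^ k - 1) / (r - 1)) ->
  INR (l + m + k - 1) * ln r + ln alpha < INR n * ln alpha /\
  INR n * ln alpha < INR (l + m + k) * ln r + 1.
Proof.
  intros Hr Ha Hk Hkm Hml Hd1 Hd2 Hd3 Hd1p r HN.
  destruct (alpha_bounds alpha Ha) as [ha1 ha2].
  assert (hr : 2 <= r) by (unfold r; apply (le_INR 2); lia).
  assert (e1 : 1 <= INR d1) by (apply (le_INR 1); lia).
  assert (e1' : INR d1 <= r - 1).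
  { unfold r. replace rho with (S (rho - 1)) by lia. rewrite S_INR.
    assert (INR d1 <= INR (rho - 1)) by (apply le_INR; lia). lra. }
  assert (e2' : INR d2 <= r - 1).
  { unfold r. replace rho with (S (rho - 1)) by lia. rewrite S_INR.
    assert (INR d2 <= INR (rho - 1)) by (apply le_INR; lia). lra. }
  assert (e3' : INR d3 <= r - 1).
  { unfold r. replace rho with (S (rho - 1)) by lia. rewrite S_INR.
    assert (INR d3 <= INR (rho - 1)) by (apply le_INR; lia). lra. }
  assert (e2 : 0 <= INR d2) by apply pos_INR.
  assert (e3 : 0 <= INR d3) by apply pos_INR.
  assert (powr : forall j, (1 <= j)%nat -> r <= r ^ j).
  { intros j hj. replace j with (S (j-1)) by lia. simpl.
    assert (1 <= r^(j-1)) by (apply pow_R1_Rle; lra). nra. }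
  set (L := (l+m+k)%nat).
  set (A := r^l). set (B := r^m). set (C := r^k).
  assert (hA : r <= A) by (apply powr; lia).
  assert (hB : r <= B) by (apply powr; lia).
  assert (hC : r <= C) by (apply powr; lia).
  assert (hL : r^L = A*B*C) by (unfold L, A, B, C; rewrite !pow_add; ring).
  assert (hL1 : r^(L-1) * r = A*B*C).
  { rewrite <- hL. replace L with (S (L-1)) at 2 by (unfold L; lia). simpl. ring. }
  rewrite pow_add in HN. fold A B C in HN.
  set (gl := (A-1)/(r-1)) in HN. set (gm := (B-1)/(r-1)) in HN. set (gk := (C-1)/(r-1)) in HN.
  assert (gle : gl * (r-1) = A-1) by (unfold gl; field; lra).
  assert (gme : gm * (r-1) = B-1) by (unfold gm; field; lra).
  assert (gke : gk * (r-1) = C-1) by (unfold gk; field; lra).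
  assert (gl0 : 0 <= gm) by nra.
  assert (gk0 : 0 <= gk) by nra.
  assert (glA : A <= gl * r) by nra.
  assert (BC0 : r*r <= B*C) by nra.
  assert (Vup : INR (narayana n) <= r^L - 1).
  { rewrite hL, HN.
    assert (INR d1 * gl <= (r-1)*gl) by nra.
    assert (INR d2 * gm <= (r-1)*gm) by nra.
    assert (INR d3 * gk <= (r-1)*gk) by nra.
    nra. }
  assert (Vlo : r^(L-1) <= INR (narayana n)).
  { assert (r^(L-1)*r <= INR (narayana n) * r); [|nra].
    rewrite hL1, HN.
    assert (gl <= INR d1 * gl) by nra.
    assert (0 <= INR d2 * gm * C) by (apply Rmult_le_pos; [nra|lra]).
    assert (0 <= INR d3 * gk) by nra.
    assert (A*(B*C) <= gl*r*(B*C)) by (apply Rmult_le_compat_r; nra).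
    assert (gl*r*(B*C) <= INR d1*gl*r*(B*C)) by (apply Rmult_le_compat_r; nra).
    nra. }
  assert (r2 : r^2 <= r^(L-1)) by (apply Rle_pow; [lra| unfold L; lia]).
  assert (N4 : 4 <= INR (narayana n)) by (simpl in r2; nra).
  assert (n6 : (6 <= n)%nat).
  { destruct (Compare_dec.le_lt_dec 6 n) as [h|h]; [exact h|].
    exfalso. destruct n as [|[|[|[|[|[|n]]]]]]; try lia; simpl narayana in N4; simpl INR in N4; lra. }
  assert (ha0 : 0 < alpha) by lra.
  assert (hr0 : 0 < r) by lra.
  assert (U : INR (narayana n) * alpha < alpha ^ n).
  { destruct (upper alpha Ha (n-3)) as [U _]. replace (n-3+3)%nat with n in U by lia. exact U. }
  assert (Lo : 0.4 * alpha ^ n <= INR (narayana n)).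
  { destruct (lower alpha Ha (n-6)) as [U2 _]. replace (n-6+6)%nat with n in U2 by lia. exact U2. }
  assert (pL1 : 0 < r^(L-1)) by (apply pow_lt; lra).
  assert (pL : 0 < r^L) by (apply pow_lt; lra).
  assert (pn : 0 < alpha^n) by (apply pow_lt; lra).
  split.
  - rewrite <- ln_pow by lra. rewrite <- ln_pow by lra. rewrite <- ln_mult by lra.
    apply ln_increasing; [nra|]. nra.
  - rewrite <- ln_pow by lra. rewrite <- ln_pow by lra.
    rewrite <- (ln_exp 1) at 1. rewrite <- ln_mult by (try apply exp_pos; lra).
    apply ln_increasing; [lra|].
    assert (h := exp1_gt). nra.
Qed.
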